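(* Let $K\ge 3$, $d_2,\dots,d_K\ge 2$ and $d_1=d_2\cdots d_K-1$. Then there is a bijection between the set of SLOCC equivalence classes of SLOCC maximal states in $\mathbb{C}^{d_1}\otimes\mathbb{C}^{d_2}\otimes\cdots\otimes\mathbb{C}^{d_K}$ and the set of SLOCC equivalence classes of nonzero states in $\mathbb{C}^{d_2}\otimes\cdots\otimes\mathbb{C}^{d_K}$. Explicitly, a maximal state $|\Phi\rangle=\sum_{i=1}^{d_1}|i\rangle|\phi_i\rangle$ (with $\{|i\rangle\}$ a basis of $\mathbb{C}^{d_1}$) is sent to the class of a nonzero vector spanning the one-dimensional space $\mathrm{span}\{|\phi_i\rangle\}^\perp\subset\mathbb{C}^{d_2}\otimes\cdots\otimes\mathbb{C}^{d_K}$.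
   Context: For a multipartite space $\mathbb{C}^{e_1}\otimes\cdots\otimes\mathbb{C}^{e_m}$ with parties the tensor factors, $|\psi\rangle\le_{\mathrm{SLOCC}}|\phi\rangle$ means $(L_1\otimes\cdots\otimes L_m)|\phi\rangle=|\psi\rangle$ for some linear operators $L_i$ on $\mathbb{C}^{e_i}$; two states are SLOCC equivalent if each is $\le_{\mathrm{SLOCC}}$ the other (equivalently, related by $L_1\otimes\cdots\otimes L_m$ with all $L_i$ invertible). A state $|\phi\rangle$ is SLOCC maximal if for every $|\psi\rangle$ in the space, $|\phi\rangle\le_{\mathrm{SLOCC}}|\psi\rangle$ implies $|\psi\rangle\le_{\mathrm{SLOCC}}|\phi\rangle$; maximal states are exactly those whose reduced density operators on every single factor have full rank, so in particular the $|\phi_i\rangle$ above are linearly independent. *)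

(* Defs.v *)
From HB Require Import structures.
From mathcomp Require Import all_boot all_order all_algebra.
Set Implicit Arguments. Unset Strict Implicit. Unset Printing Implicit Defensive.
Import Order.TTheory GRing.Theory Num.Theory.
Local Open Scope ring_scope.

Notation mindex e := {dffun forall i, 'I_(e i)}.

Notation tensor C e := {ffun mindex e -> C}.

Definition local_op (C : numClosedFieldType) (m : nat) (e : 'I_m -> nat)
  (L : forall i : 'I_m, 'M[C]_(e i)) (phi : tensor C e) : tensor C e :=
  [ffun x : mindex e => \sum_(y : mindex e) (\prod_(i < m) L i (x i) (y i)) * phi y].

Definition slocc_le (C : numClosedFieldType) (m : nat) (e : 'I_m -> nat)
  (psi phi : tensor C e) : Prop :=
  exists L : forall i : 'I_m, 'M[C]_(e i), local_op L phi = psi.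

Definition slocc_equiv (C : numClosedFieldType) (m : nat) (e : 'I_m -> nat)
  (psi phi : tensor C e) : Prop :=
  slocc_le psi phi /\ slocc_le phi psi.

Definition slocc_maximal (C : numClosedFieldType) (m : nat) (e : 'I_m -> nat)
  (phi : tensor C e) : Prop :=
  forall psi : tensor C e, slocc_le phi psi -> slocc_le psi phi.

Definition rest_dims (k : nat) (d : 'I_k.+1 -> nat) : 'I_k -> nat :=
  fun j => d (lift ord0 j).

Definition rest_index (k : nat) (d : 'I_k.+1 -> nat) (x : mindex d)
  : mindex (rest_dims d) :=
  [ffun j : 'I_k => x (lift ord0 j)].

(* <phi_i | chi>, where Phi = sum_i |i> |phi_i>, i.e. phi_i(y) = Phi(i, y). *)
Definition slice_dot (C : numClosedFieldType) (k : nat) (d : 'I_k.+1 -> nat)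
  (Phi : tensor C d) (i : 'I_(d ord0)) (chi : tensor C (rest_dims d)) : C :=
  \sum_(x : mindex d | x ord0 == i) (Phi x)^* * chi (rest_index x).

Definition orth_slices (C : numClosedFieldType) (k : nat) (d : 'I_k.+1 -> nat)
  (Phi : tensor C d) (chi : tensor C (rest_dims d)) : Prop :=
  forall i : 'I_(d ord0), slice_dot Phi i chi = 0.

Definition spans_perp (C : numClosedFieldType) (k : nat) (d : 'I_k.+1 -> nat)
  (Phi : tensor C d) (psi : tensor C (rest_dims d)) : Prop :=
  [/\ psi != 0, orth_slices Phi psi &
      forall chi, orth_slices Phi chi -> exists a : C, chi = [ffun y => a * psi y]].

(* Main.v *)
Require Import Defs.
From HB Require Import structures.
From mathcomp Require Import all_boot all_order all_algebra.
Import Order.TTheory GRing.Theory Num.Theory.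
Local Open Scope ring_scope.

Set Implicit Arguments. Unset Strict Implicit. Unset Printing Implicit Defensive.

Lemma prod_sum_dep (R : comNzRingType) (I : finType) (T_ : I -> finType)
  (f : forall i, T_ i -> R) :
  \prod_(i : I) \sum_(a : T_ i) f i a =
  \sum_(x : {dffun forall i, T_ i}) \prod_(i : I) f i (x i).
Proof.
pose P_ := fun i => [ffun a : T_ i => f i a].
transitivity (\prod_(i : I) \sum_(a : T_ i) P_ i a).
  by apply: eq_bigr => i _; apply: eq_bigr => a _; rewrite ffunE.
under eq_bigr => i _ do rewrite (big_tag (fun i a => P_ i a) i).
rewrite bigA_distr_big_dep.
have := @big_fprod _ _ _ _ (GRing.Algebra_add__canonical__Monoid_AddLaw R) I T_ P_.
move=> /= <-.
rewrite (reindex (@dffun_of_fprod I T_)); last first.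
  by apply: onW_bij; apply: dffun_of_fprod_bij.
apply: eq_bigr => t _; apply: eq_bigr => i _; by rewrite !ffunE.
Qed.

Section General.
Variables (C : numClosedFieldType) (m : nat) (e : 'I_m -> nat).
Implicit Types (A B : forall i : 'I_m, 'M[C]_(e i)) (phi : tensor C e).

Lemma eq_local_op A B phi : (forall t, A t = B t) -> local_op A phi = local_op B phi.
Proof.
move=> eAB; apply/ffunP => x; rewrite !ffunE; apply: eq_bigr => y _.
by congr (_ * _); apply: eq_bigr => t _; rewrite eAB.
Qed.

Lemma local_op_comp A B phi :
  local_op A (local_op B phi) = local_op (fun t => A t *m B t) phi.
Proof.
apply/ffunP => x; rewrite !ffunE.
under eq_bigr => y _ do rewrite ffunE big_distrr.
rewrite exchange_big /=; apply: eq_bigr => z _.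
under eq_bigr => y _ do rewrite mulrA.
rewrite -big_distrl /=; congr (_ * _).
under [RHS]eq_bigr => t _ do rewrite mxE.
rewrite prod_sum_dep; apply: eq_bigr => y _.
by rewrite -big_split.
Qed.

Lemma local_op_id phi : local_op (fun t => 1%:M) phi = phi.
Proof.
apply/ffunP => x; rewrite ffunE (bigD1 x) //=.
rewrite [X in _ * _ + X]big1.
  by rewrite addr0 big1 ?mul1r // => t _; rewrite mxE eqxx.
move=> y ne; case: (pickP (fun t => x t != y t)) => [t neq|H].
  by rewrite (bigD1 t) //= mxE (negbTE neq) mul0r mul0r.
case/eqP: ne; apply/ffunP => t; apply/eqP; move: (H t) => /= /negbFE.
by rewrite eq_sym.
Qed.

End General.


Section General2.
Variables (C : numClosedFieldType) (m : nat) (e : 'I_m -> nat).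
Implicit Types (A B : forall i : 'I_m, 'M[C]_(e i)) (phi chi : tensor C e).
Local Notation D := #|mindex e|.

Definition v2r chi : 'rV[C]_D := \row_b chi (enum_val b).
Definition r2v (v : 'rV[C]_D) : tensor C e := [ffun y => v 0 (enum_rank y)].
Definition kr A : 'M[C]_D :=
  \matrix_(a, b) \prod_t A t ((enum_val a : mindex e) t) ((enum_val b : mindex e) t).

Lemma v2rK : cancel v2r r2v.
Proof. by move=> chi; apply/ffunP => y; rewrite !ffunE mxE enum_rankK. Qed.
Lemma r2vK : cancel r2v v2r.
Proof. by move=> v; apply/rowP => b; rewrite !mxE ffunE enum_valK. Qed.
Lemma v2r_inj : injective v2r. Proof. exact: can_inj v2rK. Qed.

Lemma sum_enum (F : mindex e -> C) :
  \sum_(y : mindex e) F y = \sum_(b < D) F (enum_val b).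
Proof.
by rewrite (reindex (@enum_val _ (mem predT))) //; apply: onW_bij; apply: enum_val_bij.
Qed.

Lemma v2r_local A chi : v2r (local_op A chi) = v2r chi *m (kr A)^T.
Proof.
apply/rowP => a; rewrite !mxE ffunE sum_enum; apply: eq_bigr => b _.
by rewrite !mxE mulrC.
Qed.

Lemma eq_kr A B : (forall t, A t = B t) -> kr A = kr B.
Proof. by move=> eAB; apply/matrixP => a b; rewrite !mxE; apply: eq_bigr => t _; rewrite eAB. Qed.

Lemma mx_rowv_eq (M N : 'M[C]_D) : (forall v : 'rV_D, v *m M = v *m N) -> M = N.
Proof.
move=> H; apply/row_matrixP => i; by rewrite !rowE H.
Qed.

Lemma kr_mul A B : kr A *m kr B = kr (fun t => A t *m B t).
Proof.
apply: trmx_inj; rewrite trmx_mul; apply: mx_rowv_eq => v.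
rewrite -[v]r2vK -!v2r_local mulmxA -!v2r_local local_op_comp.
done.
Qed.

Lemma kr_id : kr (fun t => 1%:M) = 1%:M.
Proof.
apply: trmx_inj; rewrite trmx1; apply: mx_rowv_eq => v.
by rewrite -[v]r2vK -v2r_local local_op_id mulmx1.
Qed.

Lemma kr_unit A : (forall t, A t \in unitmx) -> kr A \in unitmx.
Proof.
move=> U; have h : kr A *m kr (fun t => invmx (A t)) = 1%:M.
  by rewrite kr_mul -kr_id; apply: eq_kr => t; rewrite mulmxV.
by case: (mulmx1_unit h).
Qed.

Lemma kr_inv A : (forall t, A t \in unitmx) ->
  kr (fun t => invmx (A t)) *m kr A = 1%:M.
Proof. by move=> U; rewrite kr_mul -kr_id; apply: eq_kr => t; rewrite mulVmx. Qed.

Definition adjm (p : nat) (M : 'M[C]_p) : 'M[C]_p := map_mx Num.conj M^T.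

Lemma kr_adj A : kr (fun t => adjm (A t)) = adjm (kr A).
Proof.
apply/matrixP => a b; rewrite !mxE rmorph_prod; apply: eq_bigr => t _.
by rewrite !mxE.
Qed.

Lemma scale_le (a : C) chi phi : (0 < m)%N -> slocc_le chi phi ->
  slocc_le [ffun y => a * chi y] phi.
Proof.
move=> m0 [L <-]; pose t0 := Ordinal m0.
exists (fun t => if t == t0 then a *: L t else L t).
apply/ffunP => x; rewrite !ffunE big_distrr; apply: eq_bigr => y _.
rewrite /= mulrA; congr (_ * _); rewrite (bigD1 t0) //= [in RHS](bigD1 t0) //=.
rewrite ?eqxx mxE mulrA; congr (_ * _); apply: eq_bigr => t /negbTE -> //.
Qed.

End General2.


Lemma nz_row (F : fieldType) p q (K : 'M[F]_(p, q)) : K != 0 -> exists i, row i K != 0.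
Proof.
move=> nz; case: (pickP (fun i => row i K != 0)) => [i Hi|H]; first by exists i.
case/eqP: nz; apply/row_matrixP => i; rewrite row0; apply/eqP; move: (H i) => /= /negbFE.
done.
Qed.

Lemma nz_ker (F : fieldType) p (A : 'M[F]_p) : A \notin unitmx ->
  exists u : 'rV_p, u != 0 /\ u *m A = 0.
Proof.
move=> nU; have : kermx A != 0.
  rewrite -mxrank_eq0 mxrank_ker subn_eq0 -ltnNge.
  rewrite -row_free_unit /row_free in nU.
  by rewrite ltn_neqAle nU rank_leq_row.
case/nz_row => i Hi; exists (row i (kermx A)); split => //.
by apply/sub_kermxP; apply: row_sub.
Qed.

Section Upd.
Variables (m : nat) (e : 'I_m -> nat).

Definition upd (z : mindex e) (j : 'I_m) (a : 'I_(e j)) : mindex e :=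
  [ffun t => dfwith (fun t => z t) a t].
Arguments upd z j a : clear implicits.

Lemma upd_in z j a : upd z j a j = a.
Proof. by rewrite ffunE dfwith_in. Qed.
Lemma upd_out z j a t : j != t -> upd z j a t = z t.
Proof. by move=> ne; rewrite ffunE dfwith_out. Qed.
Lemma upd_id z j : upd z j (z j) = z.
Proof. apply/ffunP => t; rewrite ffunE; by case: dfwithP. Qed.
Lemma upd_upd z j a b : upd (upd z j a) j b = upd z j b :> mindex e.
Proof.
apply/ffunP => t; rewrite !ffunE; case: dfwithP => [|t' ne].
  by rewrite dfwith_in.
by rewrite dfwith_out // ffunE dfwith_out.
Qed.
End Upd.
Arguments upd {m e} z j a.

Section KrNonunit.
Variables (C : numClosedFieldType) (m : nat) (e : 'I_m -> nat).
Local Notation D := #|mindex e|.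

Lemma kr_nonunit (A : forall t : 'I_m, 'M[C]_(e t)) (t0 t1 : 'I_m)
  (p q : 'I_(e t1)) (c0 : mindex e) :
  t0 != t1 -> p != q -> A t0 \notin unitmx -> (\rank (kr A) + 2 <= D)%N.
Proof.
move=> n01 npq nU.
have [u [u0 uA]] := nz_ker nU.
have [r ur] : exists r, u 0 r != 0.
  case: (pickP (fun r => u 0 r != 0)) => [r Hr|H]; first by exists r.
  by case/eqP: u0; apply/rowP => r; rewrite mxE; apply/eqP; move: (H r) => /negbFE.
pose cb (b : 'I_(e t1)) := upd c0 t1 b.
pose H (b : 'I_(e t1)) : forall t, 'I_(e t) -> C :=
  dfwith (fun t (a : 'I_(e t)) => (a == cb b t)%:R) (fun a : 'I_(e t0) => u 0 a).
pose w (b : 'I_(e t1)) : tensor C e := [ffun x : mindex e => \prod_t H b t (x t)].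
have Ht0 b : H b t0 = (fun a => u 0 a) by rewrite /H dfwith_in.
have Hout b t : t0 != t -> H b t = (fun a => (a == cb b t)%:R) by move=> ne; rewrite /H dfwith_out.
have wker b : v2r (w b) *m kr A = 0.
  apply/rowP => a; rewrite !mxE.
  set z : mindex e := enum_val a.
  under eq_bigr => j _ do rewrite /v2r /kr !mxE -/z.
  rewrite -(sum_enum (fun y => w b y * \prod_t A t (y t) (z t))).
  under eq_bigr => y _ do rewrite ffunE -big_split /=.
  rewrite -(prod_sum_dep (fun t c => H b t c * A t c (z t))).
  rewrite (bigD1 t0) //= Ht0.
  have -> : \sum_c u 0 c * A t0 c (z t0) = (u *m A t0) 0 (z t0) by rewrite mxE.
  by rewrite uA mxE mul0r.
pose x (b : 'I_(e t1)) := upd (cb b) t0 r.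
have wx b b' : w b (x b') = if b == b' then u 0 r else 0.
  rewrite ffunE (bigD1 t0) //= Ht0 /x upd_in.
  case: eqP => [<-|/eqP nbb].
    rewrite big1 ?mulr1 // => t nt; rewrite Hout 1?eq_sym // upd_out 1?eq_sym //.
    by rewrite eqxx.
  rewrite (bigD1 t1) /=; last by rewrite eq_sym.
  rewrite Hout // upd_out // /cb !upd_in eq_sym (negbTE nbb).
  by rewrite mul0r mulr0.
have ev b y : v2r (w b) 0 (enum_rank y) = w b y by rewrite mxE enum_rankK.
pose vp := v2r (w p); pose vq := v2r (w q).
have sK : ((vp + vq)%MS <= kermx (kr A))%MS.
  by rewrite addsmx_sub; apply/andP; split; apply/sub_kermxP; apply: wker.
have vp0 : vp != 0.
  apply/eqP => vp0; move: (ev p (x p)); rewrite -/vp vp0 mxE wx eqxx => /esym/eqP.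
  by rewrite (negbTE ur).
have nsub : ~~ (vq <= vp)%MS.
  apply/negP; case/submxP => Dm vqE.
  move: (ev q (x q)); rewrite -/vq vqE [Dm]mx11_scalar mul_scalar_mx !mxE enum_rankK.
  rewrite !wx (negbTE npq) eqxx mulr0 => /esym/eqP.
  by rewrite (negbTE ur).
have r2 : (2 <= \rank (vp + vq)%MS)%N.
  have rp : \rank vp = 1%N.
    by apply/eqP; rewrite eqn_leq rank_leq_row lt0n mxrank_eq0.
  have := ltn_leqif (mxrank_leqif_eq (addsmxSl vp vq)); rewrite rp => ->.
  apply/negP => /eqmxP E; case/negP: nsub; rewrite E; exact: addsmxSr.
have := mxrankS sK; rewrite mxrank_ker => h.
by have := leq_trans r2 h; rewrite leq_subRL ?rank_leq_row.
Qed.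
End KrNonunit.


Lemma ext_unit (F : fieldType) p q (M : 'M[F]_(p, q)) (L : 'M[F]_p) :
  \rank (L *m M) = \rank M -> exists U, U \in unitmx /\ U *m M = L *m M.
Proof.
move=> rkL; set r := \rank M in rkL *.
have rp : (r <= p)%N by apply: rank_leq_row.
set P1 := col_ebase M; set R1 := row_ebase M.
have EM : M = P1 *m pid_mx r *m R1 by rewrite mulmx_ebase.
set H := L *m P1.
set Q : 'M[F]_p := pid_mx r.
have Epq : (pid_mx r : 'M[F]_(p, q)) = Q *m pid_mx r by rewrite mul_pid_mx minnn (minn_idPr _).
have rH : \rank (H *m Q) = r.
  have e1 : \rank (L *m M) = \rank (H *m pid_mx r : 'M_(p, q)).
    by rewrite EM !mulmxA -/H mxrankMfree // row_free_unit row_ebase_unit.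
  have e1' : \rank (H *m pid_mx r : 'M_(p, q)) = r by rewrite -e1.
  apply/eqP; rewrite eqn_leq; apply/andP; split.
    have -> : H *m Q = H *m (pid_mx r : 'M_(p, q)) *m (pid_mx r : 'M_(q, p)).
      by rewrite -mulmxA mul_pid_mx minnn !(minn_idPr _) // rank_leq_col.
    by apply: leq_trans (mxrankM_maxl _ _) _; rewrite e1'.
  by rewrite -[X in (X <= _)%N]e1' Epq mulmxA; apply: mxrankM_maxl.
set H' := H *m Q.
set P2 := col_ebase H'; set R2 := row_ebase H'.
have EH' : H' = P2 *m Q *m R2 by rewrite /Q -rH mulmx_ebase.
have HQ : H' *m Q = H' by rewrite /H' -mulmxA /Q pid_mx_id.
have uP2 : P2 \in unitmx by apply: col_ebase_unit.
have uR2 : R2 \in unitmx by apply: row_ebase_unit.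
have QR2Q : Q *m R2 *m Q = Q *m R2.
  have := HQ; rewrite EH' -!mulmxA => /(congr1 (mulmx (invmx P2))).
  by rewrite !mulKmx // !mulmxA.
set Y := Q *m R2 + copid_mx r.
set Z := Q *m invmx R2 *m Q + copid_mx r.
have YZ : Y *m Z = 1%:M.
  rewrite /Y /Z mulmxDl (mulmxDr (Q *m R2)) (mulmxDr (copid_mx r)).
  have e1 : Q *m R2 *m (Q *m invmx R2 *m Q) = Q.
    by rewrite !mulmxA QR2Q mulmxK // /Q pid_mx_id.
  have e2 : Q *m R2 *m copid_mx r = 0.
    by rewrite -QR2Q -mulmxA /Q mul_pid_mx_copid // mulmx0.
  have e3 : copid_mx r *m (Q *m invmx R2 *m Q) = 0.
    by rewrite !mulmxA /Q mul_copid_mx_pid // !mul0mx.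
  rewrite e1 e2 e3 copid_mx_id // addr0 add0r /copid_mx /Q addrC subrK //.
have uY : Y \in unitmx by case: (mulmx1_unit YZ).
set X := P2 *m Y.
have XQ : X *m Q = H'.
  rewrite /X /Y -mulmxA mulmxDl QR2Q /Q mul_copid_mx_pid // addr0 mulmxA.
  by rewrite EH'.
exists (X *m invmx P1); split.
  by rewrite unitmx_mul unitmx_inv col_ebase_unit unitmx_mul uP2 uY.
rewrite {1}EM !mulmxA mulmxKV ?col_ebase_unit //.
rewrite Epq mulmxA XQ /H' -(mulmxA H) -Epq /H EM !mulmxA //.
Qed.


Section Flat.
Variables (C : numClosedFieldType) (m : nat) (e : 'I_m -> nat) (j : 'I_m) (c0 : 'I_(e j)).
Implicit Types (A B : forall i : 'I_m, 'M[C]_(e i)) (phi psi : tensor C e).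
Local Notation D := #|mindex e|.

Definition flat psi : 'M[C]_(e j, D) :=
  \matrix_(a, b) psi (upd (enum_val b) j a).

Definition sop (M : 'M[C]_(e j)) : forall t, 'M[C]_(e t) :=
  @dfwith _ (fun t => 'M[C]_(e t)) (fun t => 1%:M) j M.

Lemma flat_inj psi psi' : flat psi = flat psi' -> psi = psi'.
Proof.
move=> E; apply/ffunP => z.
have := congr1 (fun M : 'M[C]_(e j, D) => M (z j) (enum_rank z)) E.
by rewrite /= !mxE enum_rankK upd_id.
Qed.

Lemma prod_offj (F : forall t, 'I_(e t) -> C) (x : mindex e) :
  \prod_t F t (x t) = F j (x j) * \prod_(t | j != t) F t (x t).
Proof. by rewrite (bigD1 j) //=; congr (_ * _); apply: eq_bigl => t; rewrite eq_sym. Qed.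

Lemma flat_sop M psi : flat (local_op (sop M) psi) = M *m flat psi.
Proof.
apply/matrixP => a bz; rewrite !mxE ffunE; set z : mindex e := enum_val bz.
transitivity (\sum_(y : mindex e | [forall t, (j != t) ==> (y t == z t)]) M a (y j) * psi y).
  rewrite [RHS]big_mkcond /=; apply: eq_bigr => y _.
  rewrite (prod_offj (fun t a' => sop M t a' (y t))) /sop dfwith_in upd_in.
  case: ifP => [/forallP H|/negbT/forallPn [t]].
    rewrite big1 ?mulr1 // => t nt; rewrite dfwith_out // mxE upd_out //.
    by move: (H t); rewrite nt /= eq_sym => ->.
  rewrite negb_imply => /andP [nt nyz].
  rewrite (bigD1 t) //= dfwith_out // mxE upd_out // eq_sym (negbTE nyz).
  by rewrite mul0r mulr0 mul0r.
rewrite (reindex_onto (fun c => upd z j c) (fun y : mindex e => y j)) /=; last first.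
  move=> y /forallP H; apply/ffunP => t; rewrite ffunE.
  have [<-|nt] := eqVneq j t; first by rewrite dfwith_in.
  by rewrite dfwith_out //; move: (H t); rewrite nt /= => /eqP.
apply: eq_big => [c|c _]; last by rewrite upd_in mxE.
rewrite upd_in eqxx andbT; apply/forallP => t; apply/implyP => nt.
by rewrite upd_out.
Qed.

Lemma flat_W A psi : A j = 1%:M ->
  exists W : 'M[C]_D, flat (local_op A psi) = flat psi *m W.
Proof.
move=> Aj.
exists (\matrix_(bw, bz) (((enum_val bw : mindex e) j == c0)%:R *
   \prod_(t | j != t) A t ((enum_val bz : mindex e) t) ((enum_val bw : mindex e) t))).
apply/matrixP => a bz; rewrite !mxE ffunE; set z : mindex e := enum_val bz.
transitivity (\sum_(y : mindex e | y j == a)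
   (\prod_(t | j != t) A t (z t) (y t)) * psi y).
  rewrite [RHS]big_mkcond /=; apply: eq_bigr => y _.
  rewrite (prod_offj (fun t a' => A t (upd z j a t) a')) Aj mxE upd_in eq_sym.
  case: eqP => _; last by rewrite mul0r mul0r.
  rewrite mul1r; congr (_ * _); apply: eq_bigr => t nt; by rewrite upd_out.
rewrite (reindex_onto (fun w => upd w j a) (fun y => upd y j c0)) /=; last first.
  by move=> y /eqP <-; rewrite upd_upd upd_id.
transitivity (\sum_(w : mindex e) psi (upd w j a) * ((w j == c0)%:R *
   \prod_(t | j != t) A t (z t) (w t))); last first.
  by rewrite sum_enum; apply: eq_bigr => b _; rewrite !mxE.
rewrite big_mkcond /=; apply: eq_bigr => w _; rewrite upd_in eqxx upd_upd /=.
have -> : (upd w j c0 == w) = (w j == c0).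
  apply/eqP/eqP => [<-|<-]; [by rewrite upd_in | by rewrite upd_id].
case: eqP => _; last by rewrite mul0r mulr0.
rewrite mul1r mulrC; congr (_ * _); apply: eq_bigr => t nt; by rewrite upd_out.
Qed.

Definition dset A (M : 'M[C]_(e j)) : forall t, 'M[C]_(e t) :=
  @dfwith _ (fun t => 'M[C]_(e t)) A j M.

Lemma dset_comp A M N :
  forall t, dset A M t *m sop N t = dset A (M *m N) t.
Proof.
move=> t; have [<-|nt] := eqVneq j t.
  by rewrite /dset /sop !dfwith_in.
by rewrite /dset /sop !dfwith_out // mulmx1.
Qed.

Lemma dset_self A : forall t, dset A (A j) t = A t.
Proof. move=> t; have [<-|nt] := eqVneq j t; by rewrite /dset ?dfwith_in ?dfwith_out. Qed.

Lemma local_split A psi :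
  local_op A psi = local_op (dset A 1%:M) (local_op (sop (A j)) psi).
Proof.
rewrite local_op_comp; apply: eq_local_op => t.
by rewrite dset_comp mul1mx dset_self.
Qed.

Lemma rank_flat_le A psi :
  (\rank (flat (local_op A psi)) <= \rank (A j *m flat psi))%N.
Proof.
have h1 : dset A 1%:M j = 1%:M by rewrite /dset dfwith_in.
rewrite local_split; have [W ->] := flat_W (local_op (sop (A j)) psi) h1.
by rewrite flat_sop; apply: mxrankM_maxl.
Qed.

Lemma rank_flat_le' A psi :
  (\rank (flat (local_op A psi)) <= \rank (flat psi))%N.
Proof. by apply: leq_trans (rank_flat_le A psi) _; apply: mxrankM_maxr. Qed.

Lemma replace_j A psi U : U *m flat psi = A j *m flat psi ->
  local_op A psi = local_op (dset A U) psi.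
Proof.
move=> E; rewrite local_split.
have -> : local_op (sop (A j)) psi = local_op (sop U) psi.
  by apply: flat_inj; rewrite !flat_sop E.
rewrite local_op_comp; apply: eq_local_op => t.
by rewrite dset_comp mul1mx.
Qed.

End Flat.


Lemma extract (C : numClosedFieldType) (m : nat) (e : 'I_m -> nat)
  (A B : forall t : 'I_m, 'M[C]_(e t)) (psi psi' : tensor C e) :
  (forall t, 0 < e t)%N -> psi = local_op A psi' -> psi' = local_op B psi ->
  exists A' : forall t : 'I_m, 'M[C]_(e t),
    (forall t, A' t \in unitmx) /\ psi = local_op A' psi'.
Proof.
move=> epos EA EB.
suff H : forall n, (n <= m)%N -> exists A' : forall t : 'I_m, 'M[C]_(e t),
    psi = local_op A' psi' /\ (forall t : 'I_m, (t < n)%N -> A' t \in unitmx).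
  by have [A' [E U]] := H m (leqnn m); exists A'; split => // t; apply: U.
elim => [_|n IH lenm]; first by exists A; split.
have [A' [E U]] := IH (ltnW lenm).
pose j := Ordinal lenm; pose c0 := Ordinal (epos j).
have r1 : (\rank (flat j psi) <= \rank (A' j *m flat j psi'))%N.
  by rewrite {1}E; apply: rank_flat_le c0 _ _.
have r2 : (\rank (flat j psi') <= \rank (flat j psi))%N.
  by rewrite {1}EB; apply: rank_flat_le' c0 _ _.
have r3 : \rank (A' j *m flat j psi') = \rank (flat j psi').
  apply/eqP; rewrite eqn_leq mxrankM_maxr /=.
  exact: leq_trans r2 r1.
have [V [uV EV]] := ext_unit r3.
exists (dset A' V); split; first by rewrite E; apply: replace_j.
move=> t; rewrite ltnS leq_eqVlt => /orP [/eqP tn|tn].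
  have -> : t = j by apply: val_inj.
  by rewrite /dset dfwith_in.
rewrite /dset dfwith_out; first by apply: U.
by apply/eqP => jt; move: tn; rewrite -jt /= ltnn.
Qed.


Section Join.
Variable (k : nat).

Definition djoin (P : 'I_k.+1 -> Type) (a : P ord0) (f : forall j : 'I_k, P (lift ord0 j))
  (t : 'I_k.+1) : P t :=
  match unliftP ord0 t with
  | UnliftSome j E => ecast t' (P t') (esym E) (f j)
  | UnliftNone E => ecast t' (P t') (esym E) a
  end.

Lemma djoin0 P a f : @djoin P a f ord0 = a.
Proof.
rewrite /djoin; case: unliftP => [j E|E].
  by exfalso; have := eq_liftF ord0 j; rewrite -E eqxx.
by rewrite (eq_axiomK (esym E)).
Qed.

Lemma djoinS P a f j : @djoin P a f (lift ord0 j) = f j.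
Proof.
rewrite /djoin; case: unliftP => [j' E|E].
  have jj := lift_inj E; move: E; rewrite -jj => E.
  by rewrite (eq_axiomK (esym E)).
by exfalso; have := lift_eqF ord0 j; rewrite E eqxx.
Qed.
End Join.

Section Slices.
Variables (C : numClosedFieldType) (k : nat) (d : 'I_k.+1 -> nat).
Local Notation e := (rest_dims d).
Local Notation D := #|mindex e|.
Local Notation N0 := (d ord0).

Definition join (i : 'I_N0) (y : mindex e) : mindex d :=
  [ffun t => @djoin k (fun t => 'I_(d t)) i (fun j => y j) t].

Lemma join0 i y : join i y ord0 = i.
Proof. by rewrite ffunE djoin0. Qed.
Lemma joinS i y j : join i y (lift ord0 j) = y j.
Proof. by rewrite ffunE djoinS. Qed.
Lemma rest_join i y : rest_index (join i y) = y.
Proof. by apply/ffunP => j; rewrite ffunE joinS. Qed.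
Lemma join_eta (x : mindex d) : join (x ord0) (rest_index x) = x.
Proof.
apply/ffunP => t; case: (unliftP ord0 t) => [j ->|->].
  by rewrite joinS ffunE.
by rewrite join0.
Qed.

Lemma sum_join (F : mindex d -> C) :
  \sum_(x : mindex d) F x = \sum_(i : 'I_N0) \sum_(y : mindex e) F (join i y).
Proof.
rewrite pair_big /= (reindex (fun p : 'I_N0 * mindex e => join p.1 p.2)) //.
exists (fun x : mindex d => (x ord0, rest_index x)) => [[i y] _|x _] /=.
  by rewrite join0 rest_join.
by rewrite join_eta.
Qed.

Definition Sl (Phi : tensor C d) : 'M[C]_(N0, D) :=
  \matrix_(i, b) Phi (join i (enum_val b)).
Definition mkT (T : 'M[C]_(N0, D)) : tensor C d :=
  [ffun x : mindex d => T (x ord0) (enum_rank (rest_index x))].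

Lemma Sl_mkT T : Sl (mkT T) = T.
Proof. by apply/matrixP => i b; rewrite !mxE ffunE join0 rest_join enum_valK. Qed.
Lemma mkT_Sl Phi : mkT (Sl Phi) = Phi.
Proof. by apply/ffunP => x; rewrite ffunE mxE enum_rankK join_eta. Qed.
Lemma Sl_inj : injective Sl.
Proof. exact: can_inj mkT_Sl. Qed.

Definition restop (L : forall t, 'M[C]_(d t)) : forall j : 'I_k, 'M[C]_(e j) :=
  fun j => L (lift ord0 j).

Lemma Sl_local L X : Sl (local_op L X) = L ord0 *m Sl X *m (kr (restop L))^T.
Proof.
apply/matrixP => i b; rewrite !mxE ffunE sum_join; set y : mindex e := enum_val b.
under [RHS]eq_bigr => b' _ do rewrite !mxE big_distrl /=.
rewrite [RHS]exchange_big /=; apply: eq_bigr => i' _; rewrite sum_enum.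
apply: eq_bigr => b' _; rewrite big_ord_recl !join0 !mxE.
rewrite -/y; set y' : mindex e := enum_val b'.
rewrite -!mulrA; congr (_ * _); rewrite mulrC; congr (_ * _).
by apply: eq_bigr => j _; rewrite !joinS.
Qed.

Definition opjoin (M : 'M[C]_N0) (R : forall j : 'I_k, 'M[C]_(e j)) :
  forall t, 'M[C]_(d t) := @djoin k (fun t => 'M[C]_(d t)) M R.

Lemma Sl_local_join M R X : Sl (local_op (opjoin M R) X) = M *m Sl X *m (kr R)^T.
Proof.
rewrite Sl_local /opjoin djoin0; congr (_ *m _ *m _^T); apply: eq_kr => j.
by rewrite /restop djoinS.
Qed.

Definition cv (chi : tensor C e) : 'cV[C]_D := (map_mx Num.conj (v2r chi))^T.

Lemma orthE Phi chi : orth_slices Phi chi <-> Sl Phi *m cv chi = 0.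
Proof.
have key i : slice_dot Phi i chi = ((Sl Phi *m cv chi) i 0)^*.
  rewrite /slice_dot mxE rmorph_sum /= (big_mkcond) sum_join.
  rewrite (bigD1 i) //= [X in _ + X]big1 ?addr0; last first.
    move=> i' ni'; apply: big1 => y _; by rewrite join0 (negbTE ni').
  rewrite sum_enum; apply: eq_bigr => b _; rewrite join0 eqxx rest_join !mxE.
  by rewrite rmorphM /= conjCK.
split => [H|H i]; last by rewrite key H mxE conjC0.
apply/matrixP => i j; rewrite (ord1 j) [RHS]mxE.
by have := H i; rewrite key => /eqP; rewrite conjC_eq0 => /eqP ->.
Qed.

End Slices.


Lemma perp1 (F : fieldType) n p (S : 'M[F]_(n, p)) (w : 'cV_p) :
  (\rank S).+1 = p -> w != 0 -> S *m w = 0 ->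
  forall u, S *m u = 0 -> exists a, u = a *: w.
Proof.
move=> rS w0 Sw u Su.
set K := kermx S^T.
have rK : \rank K = 1%N by rewrite mxrank_ker mxrank_tr -{1}rS subSnn.
have wK : (w^T <= K)%MS by apply/sub_kermxP; rewrite -trmx_mul Sw trmx0.
have uK : (u^T <= K)%MS by apply/sub_kermxP; rewrite -trmx_mul Su trmx0.
have rw : \rank w^T = 1%N.
  by apply/eqP; rewrite eqn_leq rank_leq_row lt0n mxrank_eq0 trmx_eq0.
have := mxrank_leqif_eq wK; rewrite rw rK => -[_ /esym /eqmxP E].
have : (u^T <= w^T)%MS by rewrite E.
case/submxP => Dm uE; exists (Dm 0 0); apply: trmx_inj.
by rewrite uE [Dm]mx11_scalar mul_scalar_mx; apply/matrixP => i j; rewrite !mxE.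
Qed.

Section CV.
Variables (C : numClosedFieldType) (m : nat) (e : 'I_m -> nat).
Local Notation D := #|mindex e|.
Definition cvec (chi : tensor C e) : 'cV[C]_D := (map_mx Num.conj (v2r chi))^T.

Lemma conj_mxK p q (M : 'M[C]_(p, q)) : map_mx Num.conj (map_mx Num.conj M) = M.
Proof. by apply/matrixP => i j; rewrite !mxE conjCK. Qed.

Lemma cvec_local A chi : cvec (local_op A chi) = map_mx Num.conj (kr A) *m cvec chi.
Proof.
rewrite /cvec v2r_local map_mxM trmx_mul; apply/matrixP => i j; rewrite !mxE.
by apply: eq_bigr => b _; rewrite !mxE.
Qed.

Lemma cvec_local_adj A chi :
  cvec (local_op (fun t => adjm (A t)) chi) = (kr A)^T *m cvec chi.
Proof. by rewrite cvec_local kr_adj /adjm conj_mxK. Qed.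

Lemma cvec_eq0 chi : (cvec chi == 0) = (chi == 0).
Proof.
rewrite trmx_eq0 map_mx_eq0; apply/eqP/eqP => [E|->].
  by rewrite -[chi]v2rK E; apply/ffunP => y; rewrite !ffunE mxE.
by apply/rowP => b; rewrite !mxE ffunE.
Qed.

Lemma cvec_scale a chi psi : cvec chi = a *: cvec psi ->
  chi = [ffun y => a^* * psi y].
Proof.
move=> E; apply/ffunP => y; rewrite ffunE.
have := congr1 (fun M : 'cV[C]_D => M (enum_rank y) 0) E.
rewrite /cvec !mxE !enum_rankK => /(congr1 Num.conj).
by rewrite rmorphM /= !conjCK.
Qed.
End CV.


Section Main.
Variables (C : numClosedFieldType) (k : nat) (d : 'I_k.+1 -> nat).
Hypothesis hk : (3 <= k.+1)%N.
Hypothesis hd : forall j : 'I_k, (2 <= d (lift ord0 j))%N.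
Hypothesis hN : d ord0 = ((\prod_(j < k) d (lift ord0 j)) - 1)%N.
Local Notation e := (rest_dims d).
Local Notation D := #|mindex e|.
Local Notation N0 := (d ord0).

Lemma Dcard : D = (\prod_(j < k) d (lift ord0 j))%N.
Proof.
rewrite card_dep_ffun foldrE big_map big_enum /=.
by apply: eq_bigr => j _; rewrite card_ord.
Qed.

Lemma epos j : (0 < e j)%N.
Proof. by apply: leq_trans (hd j). Qed.

Lemma hD : N0.+1 = D.
Proof.
rewrite hN Dcard subn1 prednK // prodn_gt0 // => j; exact: epos.
Qed.

Lemma units_from_rank (R : forall j : 'I_k, 'M[C]_(e j)) :
  (N0 <= \rank (kr R))%N -> forall j, R j \in unitmx.
Proof.
move=> rk j0; case U: (R j0 \in unitmx) => //; move/negbT: U => nU.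
have k1 : (1 < k)%N by [].
pose j1 : 'I_k := if (val j0 == 0)%N then Ordinal k1 else Ordinal (ltnW k1).
have nj : j0 != j1.
  rewrite /j1; case: ifP => [/eqP E|/negbT E]; apply/eqP => /(congr1 val) /=.
    by rewrite E.
  by move=> E'; move/eqP: E; apply.
have h1 := hd j1.
pose p : 'I_(e j1) := Ordinal (ltnW h1).
pose q : 'I_(e j1) := Ordinal h1.
have npq : p != q by [].
pose c0 : mindex e := [ffun j => Ordinal (epos j)].
have := kr_nonunit c0 nj npq nU.
move=> h; have h' : (\rank (kr R) + 2 <= N0.+1)%N by rewrite hD.
by rewrite addn2 ltnS in h'; move: (leq_trans h' rk); rewrite ltnn.
Qed.

Lemma cvE (chi : tensor C e) : cv chi = cvec chi. Proof. by []. Qed.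

Lemma spans_of_rank (Phi : tensor C d) psi : \rank (Sl Phi) = N0 -> psi != 0 ->
  orth_slices Phi psi -> spans_perp Phi psi.
Proof.
move=> r psi0 /orthE O; split => // [|chi /orthE Oc]; first exact/orthE.
have r1 : (\rank (Sl Phi)).+1 = D by rewrite r hD.
have w0 : cvec psi != 0 by rewrite cvec_eq0.
have [a Ea] := perp1 r1 w0 O Oc.
by exists a^*; apply: cvec_scale.
Qed.

Lemma exists_perp (Phi : tensor C d) : \rank (Sl Phi) = N0 ->
  exists psi, spans_perp Phi psi.
Proof.
move=> r; set K := kermx (Sl Phi)^T.
have K0 : K != 0.
  by rewrite -mxrank_eq0 mxrank_ker mxrank_tr r -hD subSnn.
have [i wi] := nz_row K0; set w := row i K in wi.
have wS : w *m (Sl Phi)^T = 0 by apply/sub_kermxP; apply: row_sub.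
pose psi := r2v (map_mx Num.conj w).
have cpsi : cvec psi = w^T by rewrite /cvec /psi r2vK conj_mxK.
have psi0 : psi != 0 by rewrite -cvec_eq0 cpsi trmx_eq0.
exists psi; apply: spans_of_rank => //; apply/orthE.
by rewrite cvE cpsi -[Sl Phi]trmxK -trmx_mul wS trmx0.
Qed.

Lemma max_rank (Phi : tensor C d) : slocc_maximal Phi -> \rank (Sl Phi) = N0.
Proof.
move=> maxP; set S := Sl Phi.
apply/eqP; rewrite eqn_leq rank_leq_row /= leqNgt; apply/negP => lt.
have K0 : kermx S != 0.
  by rewrite -mxrank_eq0 mxrank_ker subn_eq0 -ltnNge.
have [c [ci cS]] : exists c : 'rV[C]_N0, c != 0 /\ c *m S = 0.
  have [i ci] := nz_row K0; exists (row i (kermx S)); split => //.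
  by apply/sub_kermxP; apply: row_sub.
have [b wb] : exists b : 'I_D, ~~ (row b 1%:M <= S)%MS.
  case: (pickP (fun b : 'I_D => ~~ (row b 1%:M <= S)%MS)) => [b Hb|H]; first by exists b.
  have : (1%:M <= S)%MS by apply/row_subP => b; move: (H b) => /negbFE.
  rewrite sub1mx /row_full => /eqP rS.
  have hlt : (N0 < D)%N by rewrite -hD.
  by move: (rank_leq_row S); rewrite rS leqNgt hlt.
set w := row b (1%:M : 'M[C]_D) in wb.
have [p0 cp0] : exists p0, c 0 p0 != 0.
  case: (pickP (fun p0 : 'I_N0 => c 0 p0 != 0)) => [p0 Hp|H]; first by exists p0.
  exfalso; move/eqP: ci; apply; apply/rowP => r; rewrite [RHS]mxE; apply/eqP.
  by move: (H r) => /= /negbFE.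
pose u : 'cV[C]_N0 := (c 0 p0)^-1 *: delta_mx p0 0.
have cu : c *m u = 1%:M.
  rewrite /u -scalemxAr; apply/rowP => z; rewrite (ord1 z) !mxE.
  rewrite (bigD1 p0) //= big1 ?addr0 => [|r nr]; last by rewrite !mxE (negbTE nr) mulr0.
  by rewrite !mxE !eqxx mulr1 mulVf.
pose T := S + u *m w.
pose G := 1%:M - u *m c.
have GT : G *m T = S.
  rewrite /G /T mulmxBl mul1mx mulmxDr -!mulmxA cS mulmx0 (mulmxA c) cu mul1mx.
  by rewrite add0r addrK.
have cT : c *m T = w by rewrite /T mulmxDr cS add0r mulmxA cu mul1mx.
have ST : (S <= T)%MS by rewrite -GT submxMl.
have wT : (w <= T)%MS by rewrite -cT submxMl.
have rT : (\rank S < \rank T)%N.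
  rewrite (ltn_leqif (mxrank_leqif_eq ST)); apply/negP => /eqmxP E.
  by case/negP: wb; rewrite E.
pose psi := mkT T.
have le1 : slocc_le Phi psi.
  exists (opjoin G (fun j => 1%:M)); apply: Sl_inj.
  by rewrite Sl_local_join Sl_mkT kr_id trmx1 mulmx1 GT.
have [L EL] := maxP psi le1.
have := congr1 (@Sl C k d) EL; rewrite Sl_local Sl_mkT => ET.
have : (\rank T <= \rank S)%N.
  by rewrite -ET; apply: leq_trans (mxrankM_maxl _ _) _; apply: mxrankM_maxr.
by rewrite leqNgt rT.
Qed.

Lemma unit_factors (L0 : 'M[C]_N0) (X : 'M[C]_(N0, D)) (R : forall j : 'I_k, 'M[C]_(e j)) :
  \rank (L0 *m X *m (kr R)^T) = N0 -> L0 \in unitmx /\ (forall j, R j \in unitmx).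
Proof.
move=> r; split.
  rewrite -row_free_unit /row_free eqn_leq rank_leq_row /= -{1}r.
  by apply: leq_trans (mxrankM_maxl _ _) _; apply: mxrankM_maxl.
apply: units_from_rank; rewrite -{1}r -(mxrank_tr (kr R)); exact: mxrankM_maxr.
Qed.

Lemma rank_max (Phi : tensor C d) : \rank (Sl Phi) = N0 -> slocc_maximal Phi.
Proof.
move=> r X [L EL].
have ES : Sl Phi = L ord0 *m Sl X *m (kr (restop L))^T by rewrite -EL Sl_local.
have [u0 ur] : L ord0 \in unitmx /\ (forall j, restop L j \in unitmx).
  by apply: (@unit_factors _ (Sl X)); rewrite -ES.
exists (opjoin (invmx (L ord0)) (fun j => invmx (restop L j))); apply: Sl_inj.
rewrite Sl_local_join ES !mulmxA mulVmx // mul1mx -mulmxA -trmx_mul kr_inv //.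
by rewrite trmx1 mulmx1.
Qed.

Lemma dir1 (Phi Phi' : tensor C d) psi psi' : \rank (Sl Phi) = N0 ->
  spans_perp Phi psi -> spans_perp Phi' psi' -> slocc_le Phi Phi' -> slocc_le psi' psi.
Proof.
move=> r [psi0 Opsi _] [_ _ Hall] [L EL].
have ES : Sl Phi = L ord0 *m Sl Phi' *m (kr (restop L))^T by rewrite -EL Sl_local.
have [u0 ur] : L ord0 \in unitmx /\ (forall j, restop L j \in unitmx).
  by apply: (@unit_factors _ (Sl Phi')); rewrite -ES.
have uk : (kr (restop L))^T \in unitmx by rewrite unitmx_tr kr_unit.
pose chi := local_op (fun j => adjm (restop L j)) psi.
have cchi : cvec chi = (kr (restop L))^T *m cvec psi by rewrite cvec_local_adj.
have Och : orth_slices Phi' chi.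
  apply/orthE; move/orthE: Opsi; rewrite ES cvE cvE cchi -!mulmxA => /(congr1 (mulmx (invmx (L ord0)))).
  by rewrite mulKmx // mulmx0 mulmxA.
have [a Ea] := Hall chi Och.
have a0 : a != 0.
  apply/eqP => a0; move: psi0; rewrite -cvec_eq0 => /eqP; apply.
  have : cvec chi = 0.
    by apply/eqP; rewrite cvec_eq0 Ea; apply/eqP/ffunP => y; rewrite !ffunE a0 mul0r.
  rewrite cchi => /(congr1 (mulmx (invmx (kr (restop L))^T))).
  by rewrite mulKmx // mulmx0.
have -> : psi' = [ffun y => a^-1 * chi y].
  by apply/ffunP => y; rewrite Ea !ffunE mulrA mulVf // mul1r.
apply: scale_le; first by rewrite -ltnS; apply: leq_trans hk.
by exists (fun j => adjm (restop L j)).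
Qed.

Lemma dir2 (Phi Phi' : tensor C d) psi psi' : \rank (Sl Phi) = N0 -> \rank (Sl Phi') = N0 ->
  spans_perp Phi psi -> spans_perp Phi' psi' -> slocc_equiv psi psi' -> slocc_le Phi' Phi.
Proof.
move=> r r' [psi0 Opsi _] [psi'0 Opsi' _] [[A EA] [B EB]].
have [A' [uA EA']] := extract epos (esym EA) (esym EB).
pose adjA := fun j => adjm (A' j).
pose Phit := local_op (opjoin 1%:M adjA) Phi.
have trk : (kr adjA)^T = map_mx Num.conj (kr A').
  by rewrite kr_adj /adjm map_trmx trmxK.
have ESt : Sl Phit = Sl Phi *m map_mx Num.conj (kr A').
  by rewrite Sl_local_join mul1mx trk.
have Ot : Sl Phit *m cv psi' = 0.
  move/orthE: Opsi; rewrite ESt -mulmxA cvE cvE EA' cvec_local => //.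
set K := kermx (cv psi').
have rK : \rank K = N0.
  have D1 : (D - 1 = N0)%N by rewrite -hD subn1.
  suff h1 : \rank (cv psi') = 1%N by rewrite mxrank_ker h1 D1.
  apply/eqP; rewrite eqn_leq rank_leq_col lt0n mxrank_eq0 cvE cvec_eq0.
  exact: psi'0.
have S'K : (Sl Phi' <= K)%MS by apply/sub_kermxP; apply/orthE.
have E' : (Sl Phi' == K)%MS.
  by have := mxrank_leqif_eq S'K; rewrite r' rK => -[_ <-].
have StS : (Sl Phit <= Sl Phi')%MS.
  by rewrite (eqmxP E'); apply/sub_kermxP.
case/submxP: StS => G EG.
have uc : map_mx Num.conj (kr A') \in unitmx by rewrite map_unitmx kr_unit.
have rt : \rank (Sl Phit) = N0 by rewrite ESt mxrankMfree ?row_free_unit.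
have uG : G \in unitmx.
  rewrite -row_free_unit /row_free eqn_leq rank_leq_row /= -{1}rt EG.
  exact: mxrankM_maxl.
exists (opjoin (invmx G) adjA); apply: Sl_inj.
by rewrite Sl_local_join trk -mulmxA -ESt EG mulKmx.
Qed.

Lemma rank_kercv psi : psi != 0 -> \rank (kermx (@cv C k d psi)) = N0.
Proof.
move=> psi0; have D1 : (D - 1 = N0)%N by rewrite -hD subn1.
suff h1 : \rank (@cv C k d psi) = 1%N by rewrite mxrank_ker h1 D1.
apply/eqP; rewrite eqn_leq rank_leq_col lt0n mxrank_eq0 cvE cvec_eq0.
exact: psi0.
Qed.

Lemma surj psi : psi != 0 ->
  exists Phi : tensor C d, \rank (Sl Phi) = N0 /\ orth_slices Phi psi.
Proof.
move=> psi0; set K := kermx (@cv C k d psi).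
have rK := rank_kercv psi0.
have ND : (N0 <= D)%N by rewrite -hD.
pose T := (pid_mx N0 : 'M[C]_(N0, D)) *m row_ebase K.
have TK : (T <= K)%MS.
  have EK : K = col_ebase K *m pid_mx N0 *m row_ebase K by rewrite -rK mulmx_ebase.
  have -> : T = (pid_mx N0 : 'M[C]_(N0, D)) *m invmx (col_ebase K) *m K.
    rewrite {2}EK -!mulmxA mulKmx ?col_ebase_unit //.
    by rewrite /T !mulmxA mul_pid_mx minnn (minn_idPr ND).
  exact: submxMl.
have rT : \rank T = N0.
  by rewrite mxrankMfree ?row_free_unit ?row_ebase_unit // rank_pid_mx.
exists (mkT T); rewrite Sl_mkT; split => //.
by apply/orthE; rewrite Sl_mkT; apply/sub_kermxP.
Qed.

Lemma main_in :
  [/\ forall Phi : tensor C d, slocc_maximal Phi ->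
        exists psi : tensor C (rest_dims d), spans_perp Phi psi,
      forall (Phi Phi' : tensor C d) (psi psi' : tensor C (rest_dims d)),
        slocc_maximal Phi -> slocc_maximal Phi' ->
        spans_perp Phi psi -> spans_perp Phi' psi' ->
        (slocc_equiv Phi Phi' <-> slocc_equiv psi psi') &
      forall psi : tensor C (rest_dims d), psi != 0 ->
        exists (Phi : tensor C d) (psi' : tensor C (rest_dims d)),
          [/\ slocc_maximal Phi, spans_perp Phi psi' & slocc_equiv psi' psi]].
Proof.
split.
- by move=> Phi /max_rank; apply: exists_perp.
- move=> Phi Phi' psi psi' mP mP' sP sP'; split.
    move=> [le1 le2]; split.
      exact: (dir1 (max_rank mP') sP' sP le2).
    exact: (dir1 (max_rank mP) sP sP' le1).
  move=> eq; have le : slocc_le Phi' Phi := dir2 (max_rank mP) (max_rank mP') sP sP' eq.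
  by split => //; apply: mP'.
- move=> psi psi0; have [Phi [r O]] := surj psi0.
  exists Phi, psi; split; first exact: rank_max.
    exact: spans_of_rank.
  by split; exists (fun j => 1%:M); rewrite local_op_id.
Qed.

End Main.


Unset Implicit Arguments.

(* K = k.+1 parties; party 0 has dimension d_1 = d_2 ... d_K - 1. *)
Theorem mainTheorem10 (C : numClosedFieldType) (k : nat) (d : 'I_k.+1 -> nat) :
  (3 <= k.+1)%N ->
  (forall j : 'I_k, 2 <= d (lift ord0 j))%N ->
  d ord0 = ((\prod_(j < k) d (lift ord0 j)) - 1)%N ->
  [/\ (* the map Phi |-> [psi] is defined on maximal states *)
      forall Phi : tensor C d, slocc_maximal Phi ->
        exists psi : tensor C (rest_dims d), spans_perp Phi psi,
      (* it is well defined on classes and injective on classes *)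
      forall (Phi Phi' : tensor C d) (psi psi' : tensor C (rest_dims d)),
        slocc_maximal Phi -> slocc_maximal Phi' ->
        spans_perp Phi psi -> spans_perp Phi' psi' ->
        (slocc_equiv Phi Phi' <-> slocc_equiv psi psi') &
      (* it is surjective onto classes of nonzero states *)
      forall psi : tensor C (rest_dims d), psi != 0 ->
        exists (Phi : tensor C d) (psi' : tensor C (rest_dims d)),
          [/\ slocc_maximal Phi, spans_perp Phi psi' & slocc_equiv psi' psi]].
Proof.
move=> hk hd hN; exact: (@main_in C k d hk hd hN).
Qed.
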